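(* For all formulas $A,B$ of bilattice logic: if for every HBL $(\mathbb{L}_1,\mathbb{L}_2,\mathrm{n},\mathrm{p})$ and every assignment of the atoms $p_1$ to elements of $\mathbb{L}_1$ and $p_2$ to elements of $\mathbb{L}_2$ the interpretation of $t_1(A)$ is $\le_1$ the interpretation of $t_1(B)$, then $A\vDash_{\mathsf{B}}B$.
   Context: A heterogeneous bilattice (HBL) is a tuple $(\mathbb{L}_1,\mathbb{L}_2,\mathrm{n},\mathrm{p})$ where $\mathbb{L}_1=(L_1,\sqcap_1,\sqcup_1,0_1,1_1)$, $\mathbb{L}_2=(L_2,\sqcap_2,\sqcup_2,0_2,1_2)$ are bounded distributive lattices and $\mathrm{n}:\mathbb{L}_1\to\mathbb{L}_2$, $\mathrm{p}:\mathbb{L}_2\to\mathbb{L}_1$ are mutually inverse lattice isomorphisms; $\le_1$ is the order of $\mathbb{L}_1$. A bilattice is $(B,\le_t,\le_k,\neg)$ with $(B,\le_t)$ (operations $\wedge,\vee$) and $(B,\le_k)$ (operations $\otimes,\oplus$) lattices and $\neg$ satisfying: $a\le_tb\Rightarrow\neg b\le_t\neg a$, $a\le_kb\Rightarrow\neg a\le_k\neg b$, $\neg\neg a=a$. It is distributive if $x\circ(y\bullet z)=(x\circ y)\bullet(x\circ z)$ for all $\circ,\bullet\in\{\wedge,\vee,\otimes,\oplus\}$; bounds are $\mathtt{f},\mathtt{t}$ for $\le_t$ and $\bot,\top$ for $\le_k$. $\mathsf{B}$ is the class of bounded distributive bilattices. Formulas of bilattice logic: $A::=p\mid \mathtt{t}\mid\mathtt{f}\mid\top\mid\bot\mid\neg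 A\mid A\wedge A\mid A\vee A\mid A\otimes A\mid A\oplus A$, interpreted in bilattices in the obvious way. $A\vDash_{\mathsf{B}}C$ means: for every $\mathbb{B}\in\mathsf{B}$ and every assignment, if $A^{\mathbb{B}}\in F_{\mathtt{t}}$ then $C^{\mathbb{B}}\in F_{\mathtt{t}}$, where $F_{\mathtt{t}}=\{a\in B:\mathtt{t}\le_ka\}$. Translation into the two-sorted language (type-1 terms built from type-1 atoms $p_1$, $0_1,1_1,\sqcap_1,\sqcup_1$ and $\mathrm{p}$ applied to type-2 terms; type-2 terms analogously with $\mathrm{n}$): $t_1(p)=p_1$, $t_2(p)=p_2$; $t_1(\mathtt{t})=1_1,t_2(\mathtt{t})=0_2$; $t_1(\mathtt{f})=0_1,t_2(\mathtt{f})=1_2$; $t_1(\top)=1_1,t_2(\top)=1_2$; $t_1(\bot)=0_1,t_2(\bot)=0_2$; $t_1(A\wedge B)=t_1A\sqcap_1t_1B$, $t_2(A\wedge B)=t_2A\sqcup_2t_2B$; $t_1(A\vee B)=t_1A\sqcup_1t_1B$, $t_2(A\vee B)=t_2A\sqcap_2t_2B$; $t_1(A\otimes B)=t_1A\sqcap_1t_1B$, $t_2(A\otimes B)=t_2A\sqcap_2t_2B$; $t_1(A\oplus B)=t_1A\sqcup_1t_1B$, $t_2(A\oplus B)=t_2A\sqcup_2t_2B$; $t_1(\neg A)=\mathrm{p}\,t_2(A)$, $t_2(\neg A)=\mathrm{n}\,t_1(A)$. *)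

(* Defs.v *)
From HB Require Import structures.
From mathcomp Require Import all_boot order.
Set Implicit Arguments. Unset Strict Implicit. Unset Printing Implicit Defensive.
Import Order.TTheory.
Local Open Scope order_scope.

Inductive fm : Type :=
  | Atom : nat -> fm
  | Ftt : fm
  | Fff : fm
  | Ftop : fm
  | Fbot : fm
  | Fneg : fm -> fm
  | Fand : fm -> fm -> fm
  | For  : fm -> fm -> fm
  | Fotimes : fm -> fm -> fm
  | Foplus : fm -> fm -> fm.

(* The class B of the paper consists of bounded distributive bilattices; the
   bounds f,t (for <=_t) and bot,top (for <=_k) are part of the record, and
   distributivity is the separate predicate [distributive_bilattice]. *)
Record bilattice := Bilattice {
  bcar :> Type;
  le_t : bcar -> bcar -> Prop;
  le_k : bcar -> bcar -> Prop;
  bmeet_t : bcar -> bcar -> bcar;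
  bjoin_t : bcar -> bcar -> bcar;
  bmeet_k : bcar -> bcar -> bcar;
  bjoin_k : bcar -> bcar -> bcar;
  bneg : bcar -> bcar;
  bf : bcar; btt : bcar; bbot : bcar; btop : bcar;
  le_t_refl : forall a, le_t a a;
  le_t_trans : forall a b c, le_t a b -> le_t b c -> le_t a c;
  le_t_anti : forall a b, le_t a b -> le_t b a -> a = b;
  le_k_refl : forall a, le_k a a;
  le_k_trans : forall a b c, le_k a b -> le_k b c -> le_k a c;
  le_k_anti : forall a b, le_k a b -> le_k b a -> a = b;
  meet_t_glb : forall a b c, le_t c (bmeet_t a b) <-> (le_t c a /\ le_t c b);
  join_t_lub : forall a b c, le_t (bjoin_t a b) c <-> (le_t a c /\ le_t b c);
  meet_k_glb : forall a b c, le_k c (bmeet_k a b) <-> (le_k c a /\ le_k c b);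
  join_k_lub : forall a b c, le_k (bjoin_k a b) c <-> (le_k a c /\ le_k b c);
  bf_least : forall a, le_t bf a;
  btt_greatest : forall a, le_t a btt;
  bbot_least : forall a, le_k bbot a;
  btop_greatest : forall a, le_k a btop;
  neg_t : forall a b, le_t a b -> le_t (bneg b) (bneg a);
  neg_k : forall a b, le_k a b -> le_k (bneg a) (bneg b);
  neg_invol : forall a, bneg (bneg a) = a
}.

Inductive bop := OpWedge | OpVee | OpOtimes | OpOplus.

Definition bop_interp (B : bilattice) (o : bop) : B -> B -> B :=
  match o with
  | OpWedge => @bmeet_t B
  | OpVee => @bjoin_t B
  | OpOtimes => @bmeet_k B
  | OpOplus => @bjoin_k B
  end.

Definition distributive_bilattice (B : bilattice) : Prop :=
  forall (o b : bop) (x y z : B),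
    bop_interp o x (bop_interp b y z)
    = bop_interp b (bop_interp o x y) (bop_interp o x z).

Fixpoint beval (B : bilattice) (v : nat -> B) (A : fm) : B :=
  match A with
  | Atom i => v i
  | Ftt => btt B
  | Fff => bf B
  | Ftop => btop B
  | Fbot => bbot B
  | Fneg A1 => bneg (beval v A1)
  | Fand A1 A2 => bmeet_t (beval v A1) (beval v A2)
  | For A1 A2 => bjoin_t (beval v A1) (beval v A2)
  | Fotimes A1 A2 => bmeet_k (beval v A1) (beval v A2)
  | Foplus A1 A2 => bjoin_k (beval v A1) (beval v A2)
  end.

Definition Ft (B : bilattice) (a : B) : Prop := le_k (btt B) a.

Definition bconseq (A C : fm) : Prop :=
  forall B : bilattice, distributive_bilattice B ->
  forall v : nat -> B, Ft (beval v A) -> Ft (beval v C).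

Definition hbl_iso (d1 d2 : Order.disp_t)
    (L1 : tbDistrLatticeType d1) (L2 : tbDistrLatticeType d2)
    (n : L1 -> L2) (p : L2 -> L1) : Prop :=
  [/\ cancel n p, cancel p n,
      {morph n : x y / x `&` y >-> x `&` y}, {morph n : x y / x `|` y >-> x `|` y}
    & ({morph p : x y / x `&` y >-> x `&` y} /\ {morph p : x y / x `|` y >-> x `|` y})].

(* Interpretation of the translations t_1(A) (type 1) and t_2(A) (type 2),
   under assignments v1 (atoms p_1) and v2 (atoms p_2). *)
Section Translation.
Variables (d1 d2 : Order.disp_t)
  (L1 : tbDistrLatticeType d1) (L2 : tbDistrLatticeType d2)
  (n : L1 -> L2) (p : L2 -> L1) (v1 : nat -> L1) (v2 : nat -> L2).

Fixpoint t1 (A : fm) : L1 :=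
  match A with
  | Atom i => v1 i
  | Ftt => \top
  | Fff => \bot
  | Ftop => \top
  | Fbot => \bot
  | Fneg A1 => p (t2 A1)
  | Fand A1 A2 => t1 A1 `&` t1 A2
  | For A1 A2 => t1 A1 `|` t1 A2
  | Fotimes A1 A2 => t1 A1 `&` t1 A2
  | Foplus A1 A2 => t1 A1 `|` t1 A2
  end
with t2 (A : fm) : L2 :=
  match A with
  | Atom i => v2 i
  | Ftt => \bot
  | Fff => \top
  | Ftop => \top
  | Fbot => \bot
  | Fneg A1 => n (t1 A1)
  | Fand A1 A2 => t2 A1 `|` t2 A2
  | For A1 A2 => t2 A1 `&` t2 A2
  | Fotimes A1 A2 => t2 A1 `&` t2 A2
  | Foplus A1 A2 => t2 A1 `|` t2 A2
  end.
End Translation.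

(* Main.v *)
Require Import Defs.
From HB Require Import structures.
From mathcomp Require Import all_boot order.
From mathcomp Require Import boolp.
Import Order.TTheory.
Set Implicit Arguments. Unset Strict Implicit.

Section Semi.
Variables (T : Type) (le : T -> T -> Prop) (op : T -> T -> T).
Hypothesis refl : forall a, le a a.
Hypothesis trans : forall a b c, le a b -> le b c -> le a c.
Hypothesis anti : forall a b, le a b -> le b a -> a = b.
Hypothesis glb : forall a b c, le c (op a b) <-> (le c a /\ le c b).

Lemma op_l a b : le (op a b) a. Proof. by case: (proj1 (glb a b (op a b)) (refl _)). Qed.
Lemma op_r a b : le (op a b) b. Proof. by case: (proj1 (glb a b (op a b)) (refl _)). Qed.
Lemma op_gl a b c : le c a -> le c b -> le c (op a b). Proof. by move=> *; apply/glb. Qed.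
Lemma opC a b : op a b = op b a.
Proof. by apply: anti; apply: op_gl; rewrite ?op_l ?op_r //; [apply: op_r|apply: op_l|apply: op_r|apply:op_l]. Qed.
Lemma opA a b c : op a (op b c) = op (op a b) c.
Proof.
apply: anti; repeat apply: op_gl.
- exact: op_l.
- exact: trans (op_r _ _) (op_l _ _).
- exact: trans (op_r _ _) (op_r _ _).
- exact: trans (op_l _ _) (op_l _ _).
- exact: trans (op_l _ _) (op_r _ _).
- exact: op_r.
Qed.
Lemma opI a : op a a = a.
Proof. by apply: anti; [apply: op_l| apply: op_gl]. Qed.
Lemma le_opE a b : le a b <-> op a b = a.
Proof.
split=> [h|<-]; last exact: op_r.
by apply: anti; [apply: op_l|apply: op_gl].
Qed.
End Semi.

Section BL.
Variable B : bilattice.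
Hypothesis dB : distributive_bilattice B.
Local Notation "a ∧ b" := (@bmeet_t B a b) (at level 40).
Local Notation "a ∨ b" := (@bjoin_t B a b) (at level 50).
Local Notation "a ⊗ b" := (@bmeet_k B a b) (at level 40).
Local Notation "a ⊕ b" := (@bjoin_k B a b) (at level 50).
Local Notation "¬ a" := (@bneg B a) (at level 35).
Local Notation lt := (@le_t B).
Local Notation lk := (@le_k B).
Local Notation bot := (bbot B).

Definition flip (r : B -> B -> Prop) := fun x y => r y x.

Lemma lt_trans' : forall a b c : B, flip lt a b -> flip lt b c -> flip lt a c.
Proof. move=> a b c h1 h2; exact: le_t_trans h2 h1. Qed.
Lemma lk_trans' : forall a b c : B, flip lk a b -> flip lk b c -> flip lk a c.
Proof. move=> a b c h1 h2; exact: le_k_trans h2 h1. Qed.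
Lemma lt_anti' : forall a b : B, flip lt a b -> flip lt b a -> a = b.
Proof. move=> a b h1 h2; exact: le_t_anti. Qed.
Lemma lk_anti' : forall a b : B, flip lk a b -> flip lk b a -> a = b.
Proof. move=> a b h1 h2; exact: le_k_anti. Qed.

Definition mtC := opC (@le_t_refl B) (@le_t_anti B) (@meet_t_glb B).
Definition jtC := @opC B (flip (@le_t B)) (@bjoin_t B) (fun a => @le_t_refl B a) lt_anti' (@join_t_lub B).
Definition mkC := opC (@le_k_refl B) (@le_k_anti B) (@meet_k_glb B).
Definition jkC := @opC B (flip (@le_k B)) (@bjoin_k B) (fun a => @le_k_refl B a) lk_anti' (@join_k_lub B).
Definition mtA := opA (@le_t_refl B) (@le_t_trans B) (@le_t_anti B) (@meet_t_glb B).
Definition jtA := @opA B (flip (@le_t B)) (@bjoin_t B) (fun a => @le_t_refl B a) lt_trans' lt_anti' (@join_t_lub B).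
Definition mt_l := op_l (@le_t_refl B) (@meet_t_glb B).
Definition mt_r := op_r (@le_t_refl B) (@meet_t_glb B).
Definition jt_l := @op_l B (flip (@le_t B)) (@bjoin_t B) (fun a => @le_t_refl B a) (@join_t_lub B).
Definition jt_r := @op_r B (flip (@le_t B)) (@bjoin_t B) (fun a => @le_t_refl B a) (@join_t_lub B).
Definition mk_l := op_l (@le_k_refl B) (@meet_k_glb B).
Definition mk_r := op_r (@le_k_refl B) (@meet_k_glb B).
Definition jk_l := @op_l B (flip (@le_k B)) (@bjoin_k B) (fun a => @le_k_refl B a) (@join_k_lub B).
Definition jk_r := @op_r B (flip (@le_k B)) (@bjoin_k B) (fun a => @le_k_refl B a) (@join_k_lub B).
Definition mtI := opI (@le_t_refl B) (@le_t_anti B) (@meet_t_glb B).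
Definition jtI := @opI B (flip (@le_t B)) (@bjoin_t B) (fun a => @le_t_refl B a) lt_anti' (@join_t_lub B).
Definition mkI := opI (@le_k_refl B) (@le_k_anti B) (@meet_k_glb B).
Definition jkI := @opI B (flip (@le_k B)) (@bjoin_k B) (fun a => @le_k_refl B a) lk_anti' (@join_k_lub B).
Definition lt_mE := le_opE (@le_t_refl B) (@le_t_anti B) (@meet_t_glb B).
Definition lk_mE := le_opE (@le_k_refl B) (@le_k_anti B) (@meet_k_glb B).
Definition lt_jE := @le_opE B (flip (@le_t B)) (@bjoin_t B) (fun a => @le_t_refl B a) lt_anti' (@join_t_lub B).
Definition lk_jE := @le_opE B (flip (@le_k B)) (@bjoin_k B) (fun a => @le_k_refl B a) lk_anti' (@join_k_lub B).

Lemma opbC o (a b : B) : bop_interp o a b = bop_interp o b a.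
Proof. case: o => /=; [exact: mtC|exact: jtC|exact: mkC|exact: jkC]. Qed.

Lemma mono_t o (a b c : B) : lt a b -> lt (bop_interp o c a) (bop_interp o c b).
Proof.
move=> /lt_mE h; apply/lt_mE.
by have := dB o OpWedge c a b; rewrite /= h => <-.
Qed.
Lemma mono_k o (a b c : B) : lk a b -> lk (bop_interp o c a) (bop_interp o c b).
Proof.
move=> /lk_mE h; apply/lk_mE.
by have := dB o OpOtimes c a b; rewrite /= h => <-.
Qed.
Lemma mono2_t o (a b c d : B) : lt a b -> lt c d -> lt (bop_interp o a c) (bop_interp o b d).
Proof.
move=> h1 h2; apply: le_t_trans (mono_t o a h2) _.
rewrite (opbC o a d) (opbC o b d); exact: mono_t.
Qed.
Lemma mono2_k o (a b c d : B) : lk a b -> lk c d -> lk (bop_interp o a c) (bop_interp o b d).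
Proof.
move=> h1 h2; apply: le_k_trans (mono_k o a h2) _.
rewrite (opbC o a d) (opbC o b d); exact: mono_k.
Qed.

Lemma neg_mt a b : ¬ (a ∧ b) = ¬ a ∨ ¬ b.
Proof.
apply: le_t_anti; last first.
  apply/join_t_lub; split; apply: neg_t; [exact: mt_l|exact: mt_r].
rewrite -[X in lt _ X]neg_invol; apply: neg_t; apply/meet_t_glb; split.
  by rewrite -[X in lt _ X]neg_invol; apply: neg_t; apply: jt_l.
by rewrite -[X in lt _ X]neg_invol; apply: neg_t; apply: jt_r.
Qed.
Lemma neg_jt a b : ¬ (a ∨ b) = ¬ a ∧ ¬ b.
Proof. by rewrite -{1}(neg_invol a) -{1}(neg_invol b) -neg_mt neg_invol. Qed.
Lemma neg_mk a b : ¬ (a ⊗ b) = ¬ a ⊗ ¬ b.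
Proof.
apply: le_k_anti.
  apply/meet_k_glb; split; apply: neg_k; [exact: mk_l|exact: mk_r].
rewrite -[X in lk X _]neg_invol; apply: neg_k; apply/meet_k_glb; split.
  by rewrite -[X in lk _ X]neg_invol; apply: neg_k; apply: mk_l.
by rewrite -[X in lk _ X]neg_invol; apply: neg_k; apply: mk_r.
Qed.
Lemma neg_jk a b : ¬ (a ⊕ b) = ¬ a ⊕ ¬ b.
Proof.
apply: le_k_anti; last first.
  apply/join_k_lub; split; apply: neg_k; [exact: jk_l|exact: jk_r].
rewrite -[X in lk _ X]neg_invol; apply: neg_k; apply/join_k_lub; split.
  by rewrite -[X in lk X _]neg_invol; apply: neg_k; apply: jk_l.
by rewrite -[X in lk X _]neg_invol; apply: neg_k; apply: jk_r.
Qed.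
Lemma neg_bot : ¬ bot = bot.
Proof.
apply: le_k_anti; last exact: bbot_least.
by rewrite -{2}(neg_invol bot); apply: neg_k; apply: bbot_least.
Qed.
Lemma neg_top : ¬ (btop B) = btop B.
Proof.
apply: le_k_anti; first exact: btop_greatest.
by rewrite -{1}(neg_invol (btop B)); apply: neg_k; apply: btop_greatest.
Qed.
Lemma neg_tt : ¬ (btt B) = bf B.
Proof.
apply: le_t_anti; last exact: bf_least.
by rewrite -[X in lt _ X](neg_invol (bf B)); apply: neg_t; apply: btt_greatest.
Qed.
Lemma neg_ff : ¬ (bf B) = btt B.
Proof. by rewrite -neg_tt neg_invol. Qed.

Definition g (a : B) := bot ∨ a.
Lemma g_ge a : lt bot (g a). Proof. exact: jt_l. Qed.
Lemma g_op o a b : g (bop_interp o a b) = bop_interp o (g a) (g b).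
Proof. exact: (dB OpVee o bot a b). Qed.

Lemma botk x : bot ⊕ x = x.
Proof. by rewrite jkC; apply/lk_jE; apply: bbot_least. Qed.
Lemma botk' x : bot ⊗ x = bot.
Proof. by apply/lk_mE; apply: bbot_least. Qed.
Lemma up_fix x : lt bot x -> bot ∨ x = x.
Proof. by move=> h; rewrite jtC; apply/lt_jE. Qed.

Lemma K1 x y : lt bot x -> lt bot y -> x ⊗ y = x ∧ y.
Proof.
move=> hx hy; apply: le_t_anti; last first.
  by rewrite -{1}(mkI (x ∧ y)); apply: (mono2_t OpOtimes); [apply: mt_l|apply: mt_r].
have key : forall u w, lt bot u -> lt (u ⊗ w) u.
  move=> u w hu; apply/lt_jE.
  have := dB OpVee OpOtimes u u w; rewrite /= jtI => ->.
  apply/lk_mE; rewrite -{1}(up_fix hu) [u ∨ w]jtC.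
  exact: (mono2_k OpVee (bbot_least _) (le_k_refl _)).
apply/meet_t_glb; split; first exact: key.
by rewrite mkC; apply: key.
Qed.
Lemma K2 x y : lt bot x -> lt bot y -> x ⊕ y = x ∨ y.
Proof.
move=> hx hy; apply: le_t_anti.
  by rewrite -[X in lt _ X](jkI (x ∨ y)); apply: (mono2_t OpOplus); [apply: jt_l|apply: jt_r].
apply/join_t_lub; split.
  by rewrite -{1}(botk x) [x ⊕ y]jkC; apply: (mono2_t OpOplus hy (le_t_refl _)).
by rewrite -{1}(botk y); apply: (mono2_t OpOplus hx (le_t_refl _)).
Qed.
Lemma up_k_t x y : lt bot x -> lt bot y -> lk x y -> lt x y.
Proof. by move=> hx hy /lk_mE h; apply/lt_mE; rewrite -K1 // h. Qed.
Lemma g_tt : g (btt B) = btt B.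
Proof. by rewrite /g jtC; apply/lt_jE; apply: btt_greatest. Qed.
Lemma K3 : g (btop B) = btt B.
Proof.
apply: le_t_anti; first exact: btt_greatest.
apply: up_k_t; [exact: btt_greatest|exact: g_ge|].
rewrite -{1}g_tt; exact: (mono_k OpVee _ (btop_greatest _)).
Qed.
Lemma K4 a : lk (g a) a.
Proof.
rewrite -[X in lk _ X](jtI a); exact: (mono2_k OpVee (bbot_least a) (le_k_refl _)).
Qed.
Lemma Ft_g a : Ft a <-> g a = btt B.
Proof.
split=> [h|h]; last by rewrite /Ft -h; apply: K4.
apply: le_t_anti; first exact: btt_greatest.
apply: up_k_t; [exact: btt_greatest|exact: g_ge|].
rewrite -g_tt; exact: (mono_k OpVee _ h).
Qed.
Lemma g_bot : g bot = bot. Proof. exact: jtI. Qed.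
Lemma g_ff : g (bf B) = bot. Proof. by apply/lt_jE; apply: bf_least. Qed.

End BL.

Local Open Scope order_scope.

Section Lat.
Variable B : bilattice.
Hypothesis dB : distributive_bilattice B.

Definition LL (_ : distributive_bilattice B) := {x : B | le_t (bbot B) x}.
Local Notation L := (LL dB).
HB.instance Definition _ := gen_eqMixin L.
HB.instance Definition _ := gen_choiceMixin L.

Lemma Lext (x y : L) : proj1_sig x = proj1_sig y -> x = y.
Proof. by case: x => x hx; case: y => y hy /= e; apply: eq_exist. Qed.

Definition Lmeet (x y : L) : L :=
  exist _ (bmeet_t (proj1_sig x) (proj1_sig y))
    (proj2 (meet_t_glb _ _ _) (conj (proj2_sig x) (proj2_sig y))).
Definition Ljoin (x y : L) : L :=
  exist _ (bjoin_t (proj1_sig x) (proj1_sig y))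
    (le_t_trans (proj2_sig x) (jt_l _ _)).
Definition Lle (x y : L) : bool := Lmeet x y == x.
Definition Llt (x y : L) : bool := (y != x) && Lle x y.

Lemma LmeetC : commutative Lmeet. Proof. by move=> x y; apply: Lext; apply: mtC. Qed.
Lemma LjoinC : commutative Ljoin. Proof. by move=> x y; apply: Lext; apply: jtC. Qed.
Lemma LmeetA : associative Lmeet. Proof. by move=> x y z; apply: Lext; apply: mtA. Qed.
Lemma LjoinA : associative Ljoin. Proof. by move=> x y z; apply: Lext; apply: jtA. Qed.
Lemma LjoinKI : forall y x : L, Lmeet x (Ljoin x y) = x.
Proof. by move=> y x; apply: Lext; apply/lt_mE; apply: jt_l. Qed.
Lemma LmeetKU : forall y x : L, Ljoin x (Lmeet x y) = x.
Proof. by move=> y x; apply: Lext; apply/lt_jE; apply: mt_l. Qed.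
Lemma LmeetUl : left_distributive Lmeet Ljoin.
Proof.
move=> x y z; apply: Lext => /=.
rewrite mtC; have /= -> := dB OpWedge OpVee (proj1_sig z) (proj1_sig x) (proj1_sig y).
by rewrite !(mtC (proj1_sig z)).
Qed.
Lemma Lmeetxx : idempotent_op Lmeet. Proof. by move=> x; apply: Lext; apply: mtI. Qed.

HB.instance Definition _ := Order.isMeetJoinDistrLattice.Build (Order.Disp tt tt) L
  (fun _ _ => erefl) (fun _ _ => erefl) LmeetC LjoinC LmeetA LjoinA LjoinKI LmeetKU LmeetUl Lmeetxx.

Definition Lbot : L := exist _ (bbot B) (le_t_refl _).
Definition Ltop : L := exist _ (btt B) (btt_greatest _).
Lemma Lle0x (x : L) : Lbot <= x.
Proof. by apply/eqP; apply: Lext; apply/lt_mE; apply: (proj2_sig x). Qed.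
Lemma Llex1 (x : L) : x <= Ltop.
Proof. by apply/eqP; apply: Lext; apply/lt_mE; apply: btt_greatest. Qed.
HB.instance Definition _ := Order.hasBottom.Build (Order.Disp tt tt) L Lle0x.
HB.instance Definition _ := Order.hasTop.Build (Order.Disp tt tt) L Llex1.


End Lat.

Section Main.
Variable B : bilattice.
Hypothesis dB : distributive_bilattice B.

Definition Lg (a : B) : LL dB := exist _ (g a) (g_ge a).

Lemma Lg_meet a b : Lg (bmeet_t a b) = (Lg a `&` Lg b).
Proof. apply: Lext => /=; exact: (g_op dB OpWedge). Qed.
Lemma Lg_join a b : Lg (bjoin_t a b) = (Lg a `|` Lg b).
Proof. apply: Lext => /=; exact: (g_op dB OpVee). Qed.
Lemma Lg_mk a b : Lg (bmeet_k a b) = (Lg a `&` Lg b).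
Proof. apply: Lext => /=; rewrite (g_op dB OpOtimes) /=; exact: (K1 dB (g_ge _) (g_ge _)). Qed.
Lemma Lg_jk a b : Lg (bjoin_k a b) = (Lg a `|` Lg b).
Proof. apply: Lext => /=; rewrite (g_op dB OpOplus) /=; exact: (K2 dB (g_ge _) (g_ge _)). Qed.
Lemma Lg_tt : Lg (btt B) = \top. Proof. by apply: Lext => /=; apply: g_tt. Qed.
Lemma Lg_top : Lg (btop B) = \top. Proof. by apply: Lext => /=; apply: (K3 dB). Qed.
Lemma Lg_ff : Lg (bf B) = \bot. Proof. by apply: Lext => /=; apply: g_ff. Qed.
Lemma Lg_bot : Lg (bbot B) = \bot. Proof. by apply: Lext => /=; apply: g_bot. Qed.

Lemma transl (v : nat -> B) (A : fm) :
  t1 id id (fun i => Lg (v i)) (fun i => Lg (bneg (v i))) A = Lg (beval v A) /\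
  t2 id id (fun i => Lg (v i)) (fun i => Lg (bneg (v i))) A = Lg (bneg (beval v A)).
Proof.
elim: A => [i|||||A [IH1 IH2]|A [IH1 IH2] C [IH3 IH4]|A [IH1 IH2] C [IH3 IH4]
  |A [IH1 IH2] C [IH3 IH4]|A [IH1 IH2] C [IH3 IH4]]; rewrite /=.
- by [].
- by rewrite neg_tt Lg_tt Lg_ff.
- by rewrite neg_ff Lg_tt Lg_ff.
- by rewrite neg_top Lg_top.
- by rewrite neg_bot Lg_bot.
- by rewrite IH1 IH2 neg_invol.
- by rewrite IH1 IH2 IH3 IH4 neg_mt Lg_meet Lg_join.
- by rewrite IH1 IH2 IH3 IH4 neg_jt Lg_meet Lg_join.
- by rewrite IH1 IH2 IH3 IH4 neg_mk !Lg_mk.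
- by rewrite IH1 IH2 IH3 IH4 neg_jk !Lg_jk.
Qed.
End Main.

Theorem mainTheorem6 (A B : fm) :
  (forall (d1 d2 : Order.disp_t)
          (L1 : tbDistrLatticeType d1) (L2 : tbDistrLatticeType d2)
          (n : L1 -> L2) (p : L2 -> L1),
      hbl_iso n p ->
      forall (v1 : nat -> L1) (v2 : nat -> L2),
        t1 n p v1 v2 A <= t1 n p v1 v2 B) ->
  bconseq A B.
Proof.
move=> H Bl dB v hA.
have iso : hbl_iso (@id (LL dB)) (@id (LL dB)) by split.
have := H _ _ (LL dB) (LL dB) id id iso (fun i => Lg dB (v i)) (fun i => Lg dB (bneg (v i))).
rewrite (proj1 (transl dB v A)) (proj1 (transl dB v B)).
have -> : Lg dB (beval v A) = \top by apply: Lext; apply/(Ft_g dB).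
rewrite le1x => /eqP e.
apply/(Ft_g dB); have := congr1 (@proj1_sig _ _) e; exact.
Qed.
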